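(* Let $(X,\to)$ be a transition system over $A$. For every equivalence relation $R$ on $X$ and $x_1,x_2\in X$: $(x_1,x_2)\in\beta_b(R)$ iff for all $a\in A$, every $y_1\in\delta_a(x_1)$ has some $y_2\in\delta_a(x_2)$ with $y_1\mathrel Ry_2$, and every $y_2\in\delta_a(x_2)$ has some $y_1\in\delta_a(x_1)$ with $y_1\mathrel Ry_2$.
   Context: $\delta_a(x)=\{x'\mid x\xrightarrow{a}x'\}$; $\Diamond_a(S)=\{x\mid\exists x'\in S\colon x\xrightarrow{a}x'\}$. $\alpha_b(\mathcal S)=\{(x,x')\mid\forall S\in\mathcal S\colon(x\in S\iff x'\in S)\}$, $\gamma_b(R)=\{S\subseteq X\mid\forall(x,x')\in R\colon(x\in S\iff x'\in S)\}$; $\mathit{lo}_b(\mathcal S)=\bigcup_{a\in A}\{\Diamond_a(S)\mid S\in\mathrm{cl}^{\cup,\lnot}_f(\mathcal S)\}$ with $\mathrm{cl}^{\cup,\lnot}_f$ the closure under finite unions and complement; $\beta_b=\alpha_b\circ\mathit{lo}_b\circ\gamma_b$ (on equivalences on $X$). *)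

(* Defs.v *)
From Stdlib Require Import RelationClasses.

Section Defs.
Variables (X A : Type) (trans : X -> A -> X -> Prop).

Definition delta (a : A) (x : X) : X -> Prop := fun x' => trans x a x'.

Definition Diam (a : A) (S : X -> Prop) : X -> Prop :=
  fun x => exists x', S x' /\ trans x a x'.

Definition alpha_b (SS : (X -> Prop) -> Prop) : X -> X -> Prop :=
  fun x x' => forall S, SS S -> (S x <-> S x').

Definition gamma_b (R : X -> X -> Prop) : (X -> Prop) -> Prop :=
  fun S => forall x x', R x x' -> (S x <-> S x').

(* closure under finite unions (including the empty union) and complement,
   taken extensionally (sets equal when they have the same elements) *)
Inductive cl_fin (SS : (X -> Prop) -> Prop) : (X -> Prop) -> Prop :=
| cl_base : forall S, SS S -> cl_fin SS S
| cl_empty : cl_fin SS (fun _ => False)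
| cl_union : forall S T, cl_fin SS S -> cl_fin SS T -> cl_fin SS (fun x => S x \/ T x)
| cl_compl : forall S, cl_fin SS S -> cl_fin SS (fun x => ~ S x)
| cl_ext : forall S T, cl_fin SS S -> (forall x, S x <-> T x) -> cl_fin SS T.

Definition lo_b (SS : (X -> Prop) -> Prop) : (X -> Prop) -> Prop :=
  fun T => exists a S, cl_fin SS S /\ (forall x, T x <-> Diam a S x).

Definition beta_b (R : X -> X -> Prop) : X -> X -> Prop :=
  alpha_b (lo_b (gamma_b R)).

End Defs.

(* Main.v *)
Require Import Defs.
From Stdlib Require Import RelationClasses Setoid.

Lemma cl_gamma (X : Type) (R : X -> X -> Prop) S :
  cl_fin X (gamma_b X R) S -> gamma_b X R S.
Proof.
  induction 1; unfold gamma_b in *; intros x x' Hr.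
  - apply H; auto.
  - tauto.
  - specialize (IHcl_fin1 _ _ Hr); specialize (IHcl_fin2 _ _ Hr); tauto.
  - specialize (IHcl_fin _ _ Hr); tauto.
  - specialize (IHcl_fin _ _ Hr). rewrite <- !H0. auto.
Qed.

Theorem mainTheorem10 (X A : Type) (trans : X -> A -> X -> Prop)
  (R : X -> X -> Prop) (HR : Equivalence R) (x1 x2 : X) :
  beta_b X A trans R x1 x2 <->
  (forall a : A,
     (forall y1, delta X A trans a x1 y1 ->
        exists y2, delta X A trans a x2 y2 /\ R y1 y2) /\
     (forall y2, delta X A trans a x2 y2 ->
        exists y1, delta X A trans a x1 y1 /\ R y1 y2)).
Proof.
  unfold beta_b, alpha_b, delta. split.
  - intros H a. split.
    + intros y1 Hy1.
      assert (Hl : lo_b X A trans (gamma_b X R) (Diam X A trans a (fun z => R y1 z))).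
      { exists a, (fun z => R y1 z). split; [|tauto].
        apply cl_base. intros u v Huv. split; intro; eauto using Equivalence_Transitive, Equivalence_Symmetric.
        - transitivity u; auto.
        - transitivity v; auto. symmetry; auto. }
      destruct (proj1 (H _ Hl)) as [y2 [Hr Ht]].
      { exists y1; split; auto. reflexivity. }
      eauto.
    + intros y2 Hy2.
      assert (Hl : lo_b X A trans (gamma_b X R) (Diam X A trans a (fun z => R z y2))).
      { exists a, (fun z => R z y2). split; [|tauto].
        apply cl_base. intros u v Huv. split; intro.
        - transitivity u; auto. symmetry; auto.
        - transitivity v; auto. }
      destruct (proj2 (H _ Hl)) as [y1 [Hr Ht]].
      { exists y2; split; auto. reflexivity. }
      eauto.
  - intros H T [a [S [Hcl HT]]].
    pose proof (cl_gamma X R S Hcl) as Hg.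
    rewrite !HT. unfold Diam. destruct (H a) as [H1 H2]. split.
    + intros [y1 [Hs Ht]]. destruct (H1 _ Ht) as [y2 [Ht2 Hr]].
      exists y2. split; auto. apply (Hg _ _ Hr); auto.
    + intros [y2 [Hs Ht]]. destruct (H2 _ Ht) as [y1 [Ht1 Hr]].
      exists y1. split; auto. apply (Hg _ _ Hr); auto.
Qed.
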